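(* Let $e\ge2$, $\kappa\in\mathbb Z^\ell$ with $\kappa_l-\kappa_{l+1}\ge n$, $\mathbb K$ a field and $0\ne t\in\mathbb K$ with $(\mathbb K,t)$ separating $\mathrm{Std}(\mathcal P_n)$. If $\mathbf i\in I^n$ and $1\le r<n$ satisfy $i_r=i_{r+1}$, then $T_rf_{\mathbf i}=f_{\mathbf i}T_r$ in $\mathscr H_n(\mathbb K)$.
   Context: Quantum integers $[d]=[d]_t$. $\mathscr H_n(\mathbb K)=\mathscr H_n(\mathbb K,t,\kappa)$: generators $L_1..L_n,T_1..T_{n-1}$, relations $\prod_l(L_1-[\kappa_l])=0$, $(T_r+1)(T_r-t)=0$, $L_rL_s=L_sL_r$, $T_rT_s=T_sT_r$ ($|r-s|>1$), $T_sT_{s+1}T_s=T_{s+1}T_sT_{s+1}$, $T_rL_s=L_sT_r$ ($s\ne r,r+1$), $L_{r+1}(T_r-t+1)=T_rL_r+1$. Separation: $[n]^!\prod_{l<m}\prod_{-n<d<n}[\kappa_l-\kappa_m+d]\ne0$. $I=\mathbb Z/e\mathbb Z$; content of $(l,r,c)$ is $\kappa_l-r+c$, residue $\kappa_l+c-r\bmod e$; $c_k(\mathfrak t)$ the content of $k$; $\mathrm{Std}(\mathbf i)$ the standard $\ell$-multitableaux of size $n$ with residue sequence $\mathbf i$. With $\mathrm{Cont}$ the set of all contents of standard tableaux, $F_{\mathfrak t}=\prod_k\prod_{c\in\mathrm{Cont},[c_k(\mathfrak t)]\ne[c]}\frac{L_k-[c]}{[c_k(\mathfrak t)]-[c]}$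 and $f_{\mathbf i}=\sum_{\mathfrak t\in\mathrm{Std}(\mathbf i)}F_{\mathfrak t}$. *)

(* Defs.v *)
From HB Require Import structures.
From mathcomp Require Import all_boot all_order all_algebra.
Set Implicit Arguments. Unset Strict Implicit. Unset Printing Implicit Defensive.
Import Order.TTheory GRing.Theory Num.Theory.
Local Open Scope ring_scope.

Definition qint (K : fieldType) (t : K) (d : int) : K :=
  if t == 1 then d%:~R else (t ^ d - 1) / (t - 1).

(* Separation condition:
   [n]^! * prod_{l<m} prod_{-n<d<n} [kappa_l - kappa_m + d] <> 0. *)
Definition separating (K : fieldType) (t : K) (ell n : nat) (kappa : 'I_ell -> int) : Prop :=
  (\prod_(1 <= k < n.+1) qint t k%:Z) *
  (\prod_(l < ell) \prod_(m < ell | (l < m)%N)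
      \prod_(j < (n.*2).-1) qint t (kappa l - kappa m + (j%:Z - (n%:Z - 1)))) != 0.

(* ell-multipartitions of size n: row lengths lam l r (rows r = 0..n-1,
   padded with zeros), each component weakly decreasing, total size n.
   Every ell-multipartition of n is represented exactly once. *)
Definition mpart (ell n : nat) := {ffun 'I_ell -> {ffun 'I_n -> 'I_n.+1}}.

Definition is_mpart ell n (lam : mpart ell n) : bool :=
  [forall l, forall r : 'I_n, forall r' : 'I_n,
      ((r <= r')%N ==> (lam l r' <= lam l r)%N)]
  && ((\sum_(l < ell) \sum_(r < n) (lam l r : nat))%N == n).

(* Nodes (l, r, c): component l, row r, column c (0-based). *)
Definition node (ell n : nat) := ('I_ell * 'I_n * 'I_n)%type.
Definition ncomp ell n (x : node ell n) : 'I_ell := x.1.1.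
Definition nrow ell n (x : node ell n) : nat := x.1.2.
Definition ncol ell n (x : node ell n) : nat := x.2.

Definition in_diag ell n (lam : mpart ell n) (x : node ell n) : bool :=
  (ncol x < lam (ncomp x) x.1.2)%N.

(* A tableau is given by the position of each entry: entry k+1 sits at node
   pos k. *)
Definition tabl (ell n : nat) := {ffun 'I_n -> node ell n}.

Definition is_std ell n (lam : mpart ell n) (pos : tabl ell n) : bool :=
  [&& injectiveb pos,
      [forall x, in_diag lam x == (x \in codom pos)],
      [forall k, forall k',
         [&& ncomp (pos k') == ncomp (pos k), nrow (pos k') == nrow (pos k)
           & ncol (pos k') == (ncol (pos k)).+1] ==> (k < k')%N]
    & [forall k, forall k',
         [&& ncomp (pos k') == ncomp (pos k), ncol (pos k') == ncol (pos k)
           & nrow (pos k') == (nrow (pos k)).+1] ==> (k < k')%N]].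

Definition std_pair ell n (p : mpart ell n * tabl ell n) : bool :=
  is_mpart p.1 && is_std p.1 p.2.

(* content of (l,r,c) is kappa_l - r + c (same with 0- or 1-based r,c) *)
Definition content ell n (kappa : 'I_ell -> int) (x : node ell n) : int :=
  kappa (ncomp x) - (nrow x)%:Z + (ncol x)%:Z.

(* residue in I = Z/eZ (e >= 2, so 'Z_e is Z/eZ) *)
Definition residue (e : nat) ell n (kappa : 'I_ell -> int) (x : node ell n) : 'Z_e :=
  (content kappa x)%:~R.

Definition Cont ell n (kappa : 'I_ell -> int) : seq int :=
  undup [seq content kappa ((p : mpart ell n * tabl ell n).2 k)
          | p <- enum (@std_pair ell n), k <- enum 'I_n].

(* F_t, with L k the generator L_k (1-based) *)
Definition Fidem (K : fieldType) (A : algType K) (t : K) ell n (kappa : 'I_ell -> int)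
  (L : nat -> A) (pos : tabl ell n) : A :=
  \prod_(k < n)
    \prod_(c <- Cont n kappa | qint t (content kappa (pos k)) != qint t c)
      ((qint t (content kappa (pos k)) - qint t c)^-1 *: (L k.+1 - (qint t c)%:A)).

(* f_i = sum over standard tableaux with residue sequence i (i is 1-based) *)
Definition fidem (e : nat) (K : fieldType) (A : algType K) (t : K) ell n
  (kappa : 'I_ell -> int) (L : nat -> A) (i : nat -> 'Z_e) : A :=
  \sum_(p : mpart ell n * tabl ell n |
          std_pair p && [forall k : 'I_n, residue e kappa (p.2 k) == i k.+1])
     Fidem t kappa L p.2.

(* The defining relations of H_n(K, t, kappa), generators L_1..L_n, T_1..T_{n-1}
   (1-based indices into L, T : nat -> A). *)
Definition hecke_rels (K : fieldType) (A : algType K) (t : K) ell n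
  (kappa : 'I_ell -> int) (L T : nat -> A) : Prop :=
  ((0 < n)%N -> \prod_(l < ell) (L 1%N - (qint t (kappa l))%:A) = 0) /\
  (forall r, (1 <= r < n)%N -> (T r + 1) * (T r - t%:A) = 0) /\
  (forall r s, (1 <= r <= n)%N -> (1 <= s <= n)%N -> L r * L s = L s * L r) /\
  (forall r s, (1 <= r < n)%N -> (1 <= s < n)%N -> (r.+1 < s \/ s.+1 < r)%N ->
        T r * T s = T s * T r) /\
  (forall s, (1 <= s)%N -> (s.+1 < n)%N ->
        T s * T s.+1 * T s = T s.+1 * T s * T s.+1) /\
  (forall r s, (1 <= r < n)%N -> (1 <= s <= n)%N -> s != r -> s != r.+1 ->
        T r * L s = L s * T r) /\
  (forall r, (1 <= r < n)%N -> L r.+1 * (T r - t%:A + 1) = T r * L r + 1).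

(* Main.v *)
Require Import Defs.
From HB Require Import structures.
From mathcomp Require Import all_boot all_order all_algebra fingroup perm zify.
Import Order.TTheory GRing.Theory Num.Theory.
Local Open Scope ring_scope.
Set Implicit Arguments. Unset Strict Implicit. Unset Printing Implicit Defensive.

Section Alg.
Variables (K : fieldType) (A : algType K) (t : K) (T R S : A).
Hypothesis t0 : t != 0.
Hypothesis RS : R * S = S * R.
Hypothesis quad : (T + 1) * (T - t%:A) = 0.
Hypothesis rel : S * (T - t%:A + 1) = T * R + 1.

Lemma qT : (T - t%:A + 1) * T = t%:A.
Proof.
move: quad; rewrite mulrDl mul1r mulrBr mulr_algr addrA => /subr0_eq q.
by rewrite mulrDl mul1r mulrBl mulr_algl.
Qed.

Lemma hST : S * T = T * R + 1 + t *: S - S.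
Proof.
move: rel; rewrite mulrDr mulrBr mulr1 mulr_algr => <-.
by rewrite (addrAC _ S) addrK subrK.
Qed.

Lemma hTS : T * S = R * T + 1 + t *: S - S.
Proof.
have h1 : t *: S = T * R * T + T.
  by rewrite -mulr_algr -qT mulrA rel mulrDl mul1r.
have h2 : t *: ((T - t%:A + 1) * S) = t *: (R * T + 1).
  rewrite scalerAr h1 mulrDr !mulrA qT.
  by rewrite mulr_algl scalerDr -scalerAl.
have h3 := scalerI t0 h2.
move: h3; rewrite mulrDl mul1r mulrBl mulr_algl => <-.
by rewrite (addrAC _ S) addrK subrK.
Qed.

Let c := 1 + t *: S - S.
Lemma hST' : S * T = T * R + c.
Proof. by rewrite hST /c !addrA. Qed.
Lemma hTS' : T * S = R * T + c.
Proof. by rewrite hTS /c !addrA. Qed.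
Lemma cS : S * c = c * S.
Proof. by rewrite /c mulrBl mulrBr mulrDl mulrDr mul1r mulr1 -scalerAl -scalerAr. Qed.

Lemma commTe1 : GRing.comm T (R + S).
Proof. by rewrite /GRing.comm mulrDr mulrDl hTS' hST' addrCA addrA. Qed.

Lemma commTe2 : GRing.comm T (R * S).
Proof.
have hTR : T * R = S * T - c by rewrite hST' addrK.
rewrite /GRing.comm mulrA hTR mulrBl -(mulrA S T S) hTS' mulrDr mulrA -RS cS addrK.
by [].
Qed.

Lemma commRS : GRing.comm R S. Proof. exact: RS. Qed.

Lemma pw_rec m : R ^+ m.+2 + S ^+ m.+2 = (R + S) * (R ^+ m.+1 + S ^+ m.+1) - R * S * (R ^+ m + S ^+ m).
Proof.
have cRSm : forall k, S * R ^+ k = R ^+ k * S.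
  by move=> k; apply: commrX; exact/esym.
rewrite mulrDl !mulrDr -!mulrA !cRSm !mulrA -!exprS.
apply/eqP; rewrite eq_sym subr_eq addrACA [in X in _ == X]addrACA.
by rewrite -(mulrA R S) -exprS [S ^+ m.+2 + _]addrC.
Qed.

Lemma commTpw m : GRing.comm T (R ^+ m + S ^+ m).
Proof.
suff: GRing.comm T (R ^+ m + S ^+ m) /\ GRing.comm T (R ^+ m.+1 + S ^+ m.+1) by case.
elim: m => [|m [h1 h2]].
  split; first by rewrite !expr0; apply: commrD; apply: commr1.
  by rewrite !expr1; exact: commTe1.
split=> //; rewrite pw_rec; apply: commrB; apply: commrM => //.
  exact: commTe1.
exact: commTe2.
Qed.

Lemma commTmon j k : GRing.comm T (R ^+ j * S ^+ k + R ^+ k * S ^+ j).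
Proof.
wlog jk : j k / (j <= k)%N.
  move=> W; case: (leqP j k) => [/W //|/ltnW /W]; by rewrite addrC.
have [m ->] : exists m, k = (j + m)%N by exists (k - j)%N; rewrite subnKC.
have -> : R ^+ j * S ^+ (j + m) + R ^+ (j + m) * S ^+ j = (R * S) ^+ j * (S ^+ m + R ^+ m).
  rewrite exprMn_comm; last exact: RS.
  rewrite mulrDr !exprD !mulrA -(mulrA (R ^+ j) (S ^+ j) (R ^+ m)).
  have -> : S ^+ j * R ^+ m = R ^+ m * S ^+ j.
    by apply: commrX; apply/commr_sym/commrX; exact: RS.
  by rewrite !mulrA.
apply: commrM; first by apply: commrX; exact: commTe2.
by rewrite addrC; exact: commTpw.
Qed.

Lemma commrZ' (x : A) (a : K) : GRing.comm T x -> GRing.comm T (a *: x).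
Proof.
move=> h; rewrite -mulr_algl; apply: commrM => //.
exact/commr_sym/comm_alg.
Qed.

Lemma hornE (X : A) (p : {poly K}) : horner_alg X p = \sum_(i < size p) p`_i *: X ^+ i.
Proof.
rewrite -{1}[p]coefK poly_def rmorph_sum; apply: eq_bigr => i _.
by rewrite -mul_polyC rmorphM /= horner_algC rmorphXn /= horner_algX mulr_algl.
Qed.

Lemma commTsym (p q : {poly K}) :
  GRing.comm T (horner_alg R p * horner_alg S q + horner_alg R q * horner_alg S p).
Proof.
rewrite !hornE !big_distrlr /= [X in _ + X]exchange_big /=.
rewrite -big_split /=; apply: commr_sum => i _.
rewrite -big_split /=; apply: commr_sum => j _.
rewrite -!scalerAl -!scalerAr !scalerA (mulrC q`_j) -scalerDr.
by apply: commrZ'; exact: commTmon.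
Qed.
End Alg.

Lemma tperm_lt n (i0 i1 a b : 'I_n) : (i1 : nat) = (i0 : nat).+1 -> (a < b)%N ->
  ~ (a = i0 /\ b = i1) -> (tperm i0 i1 a < tperm i0 i1 b)%N.
Proof.
move=> h ab nab.
case: tpermP => [ea|ea|na0 na1]; case: tpermP => [eb|eb|nb0 nb1]; subst => //.
all: try (exfalso; apply: nab; split; reflexivity).
all: have nv : forall x y : 'I_n, x <> y -> ((x : nat) <> y) by move=> x y hxy /val_inj.
all: repeat match goal with H : ?x <> ?y |- _ => move: (nv _ _ H); clear H => ? end.
all: lia.
Qed.


Lemma content_right ell n (kappa : 'I_ell -> int) (x y : node ell n) :
  ncomp y = ncomp x -> nrow y = nrow x -> ncol y = (ncol x).+1 ->
  content kappa y = content kappa x + 1.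
Proof. by move=> hc hr hk; rewrite /content hc hr hk -addn1 PoszD addrA. Qed.

Lemma content_down ell n (kappa : 'I_ell -> int) (x y : node ell n) :
  ncomp y = ncomp x -> ncol y = ncol x -> nrow y = (nrow x).+1 ->
  content kappa y = content kappa x - 1.
Proof.
by move=> hc hr hk; rewrite /content hc hr hk; lia.
Qed.

Lemma res_neq1 e (x : 'Z_e) : x = x + 1 -> False.
Proof. by rewrite -{1}(addr0 x) => /addrI /esym/eqP; rewrite oner_eq0. Qed.

Lemma res_neqN1 e (x : 'Z_e) : x = x - 1 -> False.
Proof.
by rewrite -{1}(addr0 x) => /addrI /esym/eqP; rewrite oppr_eq0 oner_eq0.
Qed.

Definition swpos ell n (i0 i1 : 'I_n) (pos : tabl ell n) : tabl ell n :=
  [ffun k => pos (tperm i0 i1 k)].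

Lemma std_swap e ell n (kappa : 'I_ell -> int) (lam : mpart ell n) (pos : tabl ell n)
  (i0 i1 : 'I_n) : (i1 : nat) = (i0 : nat).+1 -> is_std lam pos ->
  residue e kappa (pos i0) = residue e kappa (pos i1) ->
  is_std lam (swpos i0 i1 pos).
Proof.
move=> h01 /and4P[inj cod rowc colc] res.
have injp : injective pos by apply/injectiveP.
apply/and4P; split.
- apply/injectiveP => x y; rewrite !ffunE => /injp /perm_inj //.
- apply/forallP => x; rewrite (eqP (forallP cod x)).
  apply/eqP; apply/codomP/codomP => -[k ->].
    by exists (tperm i0 i1 k); rewrite ffunE tpermK.
  by exists (tperm i0 i1 k); rewrite ffunE.
- apply/forallP => k; apply/forallP => k'; apply/implyP; rewrite !ffunE.
  move=> /and3P[/eqP hc /eqP hr /eqP hk].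
  have := implyP (forallP (forallP rowc (tperm i0 i1 k)) (tperm i0 i1 k')).
  rewrite hc hr hk !eqxx => /(_ isT) lt.
  rewrite -(tpermK i0 i1 k) -(tpermK i0 i1 k').
  apply: tperm_lt => // -[e0 e1].
  rewrite e0 e1 in hc hr hk.
  apply: (@res_neq1 e (residue e kappa (pos i0))).
  by rewrite {1}res /residue (content_right kappa hc hr hk) intrD.
- apply/forallP => k; apply/forallP => k'; apply/implyP; rewrite !ffunE.
  move=> /and3P[/eqP hc /eqP hk /eqP hr].
  have := implyP (forallP (forallP colc (tperm i0 i1 k)) (tperm i0 i1 k')).
  rewrite hc hr hk !eqxx => /(_ isT) lt.
  rewrite -(tpermK i0 i1 k) -(tpermK i0 i1 k').
  apply: tperm_lt => // -[e0 e1].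
  rewrite e0 e1 in hc hr hk.
  apply: (@res_neqN1 e (residue e kappa (pos i0))).
  by rewrite {1}res /residue (content_down kappa hc hk hr) intrB.
Qed.

Lemma P_swap e ell n (kappa : 'I_ell -> int) (i : nat -> 'Z_e) (i0 i1 : 'I_n)
  (p : mpart ell n * tabl ell n) : (i1 : nat) = (i0 : nat).+1 ->
  i (i0 : nat).+1 = i (i1 : nat).+1 ->
  std_pair p && [forall k : 'I_n, residue e kappa (p.2 k) == i k.+1] ->
  std_pair (p.1, swpos i0 i1 p.2) &&
    [forall k : 'I_n, residue e kappa ((p.1, swpos i0 i1 p.2).2 k) == i k.+1].
Proof.
move=> h ii /andP[/andP[mp st] /forallP rs].
have res : residue e kappa (p.2 i0) = residue e kappa (p.2 i1).
  by rewrite (eqP (rs i0)) (eqP (rs i1)).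
rewrite /std_pair [(_, _).1]/= [(_, _).2]/= mp (std_swap h st res) /=.
apply/forallP => k /=; rewrite ffunE.
case: tpermP => [->|->|_ _]; last exact: rs.
  by rewrite (eqP (rs i1)) ii.
by rewrite (eqP (rs i0)) ii.
Qed.

Definition Hf (K : fieldType) (A : algType K) (t : K) ell n (kappa : 'I_ell -> int)
  (z : int) (X : A) : A :=
  \prod_(c <- Cont n kappa | qint t z != qint t c)
      ((qint t z - qint t c)^-1 *: (X - (qint t c)%:A)).

Lemma Fidem_split (K : fieldType) (A : algType K) (t : K) ell n (kappa : 'I_ell -> int)
  (L : nat -> A) (pos : tabl ell n.+1) r : (1 <= r <= n)%N ->
  Fidem t kappa L pos =
  \prod_(0 <= k < r.-1) Hf t n.+1 kappa (content kappa (pos (inord k))) (L k.+1)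
  * Hf t n.+1 kappa (content kappa (pos (inord r.-1))) (L r)
  * Hf t n.+1 kappa (content kappa (pos (inord r))) (L r.+1)
  * \prod_(r.+1 <= k < n.+1) Hf t n.+1 kappa (content kappa (pos (inord k))) (L k.+1).
Proof.
move=> /andP[r1 rn].
have -> : Fidem t kappa L pos =
   \prod_(0 <= k < n.+1) Hf t n.+1 kappa (content kappa (pos (inord k))) (L k.+1).
  by rewrite big_mkord; apply: eq_bigr => k _; rewrite inord_val.
rewrite [LHS](big_cat_nat (n := r.-1)) /=; [|lia|lia].
rewrite [X in _ * X](big_ltn (m := r.-1)); last lia.
rewrite (big_ltn (m := r.-1.+1)); last lia.
by rewrite prednK // !mulrA.
Qed.

Lemma commZ (K : fieldType) (A : algType K) (T x : A) (a : K) :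
  GRing.comm T x -> GRing.comm T (a *: x).
Proof.
move=> h; rewrite -mulr_algl; apply: commrM => //.
exact/commr_sym/comm_alg.
Qed.

Lemma horner_prod_lin (K : fieldType) (A : algType K) (X : A) (I : Type) (s : seq I)
  (P : pred I) (a b : I -> K) :
  \prod_(j <- s | P j) (a j *: (X - (b j)%:A)) =
  horner_alg X (\prod_(j <- s | P j) (a j *: ('X - (b j)%:P))).
Proof.
rewrite rmorph_prod; apply: eq_bigr => j _.
by rewrite -mul_polyC rmorphM /= horner_algC rmorphB /= horner_algX horner_algC mulr_algl.
Qed.

Lemma comm_lin (K : fieldType) (A : algType K) (T X : A) (I : Type) (s : seq I)
  (P : pred I) (a b : I -> K) : GRing.comm T X ->
  GRing.comm T (\prod_(j <- s | P j) (a j *: (X - (b j)%:A))).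
Proof.
move=> h; apply: commr_prod => j _; apply: commZ; apply: commrB => //.
exact/commr_sym/comm_alg.
Qed.

Theorem lemma4p7 (e : nat) (ell n : nat) (kappa : 'I_ell -> int)
  (K : fieldType) (t : K) :
  (2 <= e)%N ->
  (forall l m : 'I_ell, m = l.+1 :> nat -> kappa l - kappa m >= n%:Z) ->
  t != 0 ->
  separating t n kappa ->
  forall (A : algType K) (L T : nat -> A),
  hecke_rels t n kappa L T ->
  forall (i : nat -> 'Z_e) (r : nat), (1 <= r < n)%N -> i r = i r.+1 ->
  T r * fidem t n kappa L i = fidem t n kappa L i * T r.
Proof.
move=> e2 _ t0 _ A L T [hL1 [hq [hLL [hTT [hbr [hTL hrel]]]]]] i r /andP[r1 rn] ir.
destruct n as [|n]; first by [].
set i0 : 'I_n.+1 := inord r.-1.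
set i1 : 'I_n.+1 := inord r.
have v0 : (i0 : nat) = r.-1 by rewrite /i0 inordK //; lia.
have v1 : (i1 : nat) = r by rewrite /i1 inordK.
have h01 : (i1 : nat) = (i0 : nat).+1 by rewrite v0 v1; lia.
have ii : i (i0 : nat).+1 = i (i1 : nat).+1 by rewrite v0 v1 prednK.
pose P := (fun p : mpart ell n.+1 * tabl ell n.+1 =>
   std_pair p && [forall k : 'I_n.+1, residue e kappa (p.2 k) == i k.+1]).
pose sw := (fun p : mpart ell n.+1 * tabl ell n.+1 => (p.1, swpos i0 i1 p.2)).
have swK : involutive sw.
  by case=> lam pos; rewrite /sw /=; congr pair; apply/ffunP => k; rewrite !ffunE tpermK.
have Psw : forall p, P p -> P (sw p) by move=> p; exact: P_swap.
have PswE : forall p, P (sw p) = P p.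
  by move=> p; apply/idP/idP => [/Psw|/Psw //]; rewrite swK.
pose Q := (fun p : mpart ell n.+1 * tabl ell n.+1 =>
   (enum_rank (p.2 i0) < enum_rank (p.2 i1))%N).
have QswE : forall p, P p -> Q (sw p) = ~~ Q p.
  move=> p /andP[/andP[_ /and4P[inj _ _ _]] _].
  rewrite /Q /sw /= !ffunE tpermL tpermR.
  have ne : enum_rank (p.2 i1) != enum_rank (p.2 i0).
    rewrite (inj_eq enum_rank_inj) (inj_eq (injectiveP _ inj)).
    by apply/negP => /eqP e10; move: h01; rewrite e10; lia.
  by rewrite ltn_neqAle -leqNgt ne.
change (GRing.comm (T r) (\sum_(p | P p) Fidem t kappa L p.2)).
rewrite (bigID Q) /=.
have -> : \sum_(p | P p && ~~ Q p) Fidem t kappa L p.2 =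
          \sum_(p | P p && Q p) Fidem t kappa L (sw p).2.
  rewrite (reindex sw); last by exists sw => ? _; rewrite swK.
  apply: eq_bigl => p; case Pp : (P p).
    by rewrite PswE Pp QswE // negbK.
  by rewrite PswE Pp.
rewrite -big_split /=; apply: commr_sum => p /andP[Pp _].
have rn' : (1 <= r <= n)%N by rewrite r1.
rewrite !(Fidem_split t kappa L _ rn').
set G1 := \prod_(0 <= k < r.-1) _.
set G2 := \prod_(r.+1 <= k < n.+1) _.
set G1' := \prod_(0 <= k < r.-1) _.
set G2' := \prod_(r.+1 <= k < n.+1) _.
rewrite -/i0 -/i1.
have nk : forall k, (k < r.-1)%N || (r.+1 <= k <= n)%N -> (i0 != inord k) && (i1 != inord k).
  move=> k hk; apply/andP; split; apply/eqP => /(congr1 (@nat_of_ord _));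
    rewrite inordK; lia.
have -> : G1' = G1.
  rewrite /G1' /G1; apply: eq_big_nat => k /andP[_ hk].
  have /andP[n0 n1] : (i0 != inord k) && (i1 != inord k) by apply: nk; lia.
  by rewrite ffunE tpermD.
have -> : G2' = G2.
  rewrite /G2' /G2; apply: eq_big_nat => k /andP[hk1 hk].
  have /andP[n0 n1] : (i0 != inord k) && (i1 != inord k) by apply: nk; lia.
  by rewrite ffunE tpermD.
rewrite !ffunE tpermL tpermR.
have -> : forall a b c d b' c' : A, a * b * c * d + a * b' * c' * d = a * (b * c + b' * c') * d.
  by move=> *; rewrite mulrDr mulrDl !mulrA.
apply: commrM; first apply: commrM.
- rewrite /G1 big_nat_cond; apply: commr_prod => k /andP[/andP[_ hk] _].
  apply: comm_lin; apply: hTL; [lia|lia|apply/eqP; lia|apply/eqP; lia].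
- rewrite /Hf !horner_prod_lin; apply: (commTsym (t := t)) => //.
  + by apply: hLL; lia.
  + by apply: hq; lia.
  + by apply: hrel; lia.
- rewrite /G2 big_nat_cond; apply: commr_prod => k /andP[/andP[hk1 hk] _].
  apply: comm_lin; apply: hTL; [lia|lia|apply/eqP; lia|apply/eqP; lia].
Qed.
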